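(* In a network satisfying (H1) and (H2) containing the two connected components $Y+S_0\rightleftarrows U_1\to\cdots\rightleftarrows U_L\to Y+S_L$ and $\widetilde Y+S_L\rightleftarrows V_L\to\widetilde Y+S_{L-1}\rightleftarrows\cdots\rightleftarrows V_1\to\widetilde Y+S_0$ ($L\ge1$), with rate constants as in the context, fix $1\le n\le L$ and $0\le k\le n-1$. Let $\ell$ be the minimal positive integer such that a monomial $y^r v_{n-k}$ with some $r\ge0$ appears in $s_n^{(\ell)}$. Then $\ell=2k+1$, $r=k$, and the coefficient of $y^k v_{n-k}$ in $s_n^{(2k+1)}$ is \[\tilde b_{n-k}\prod_{j=0}^{k-1}a_{n-j}\,c_{n-j}\] (empty product $=1$).
   Context: Species are capital letters, concentrations lower-case letters. Mass-action system: $\dot{\mathbf{x}}=\sum_{y\to y'}k_{yy'}\mathbf{x}^y(y'-y)$, rates $k_{yy'}>0$. Total derivative: $\dot\varphi=\sum_i\frac{\partial\varphi}{\partial x_i}\dot x_i$ with $\dot x_i$ replaced by the right-hand side; $\varphi^{(\ell)}$ the $\ell$-th iterate; a monomial appears if its coefficient (a polynomial in rate constants) is nonzero. (H1) Every connected component has the form $Y+S_0\rightleftarrows U_1\to\cdots\rightleftarrows U_L\to Y+S_L$ (reactions $Y+S_{j-1}\to U_j$, $U_j\to Y+S_{j-1}$, $U_j\to Y+S_j$), unique enzyme; intermediates distinct throughout the network; non-intermediates of a component pairwise distinct but may appear in other components; each complex in a unique component. $\mathscr{S}_U$ = substrates/products of the component of intermediate $U$. (H2) A partition $\mathscr{S}^{(0)}\sqcup\cdots\sqcup\mathscr{S}^{(M)}$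 ($M\ge2$, nonempty, $\mathscr{S}^{(0)}$ the intermediates) with: for each intermediate $U$ with enzyme $Y$, some $\alpha\ge1$ has $\mathscr{S}_U\subseteq\mathscr{S}^{(\alpha)}$, $Y\notin\mathscr{S}^{(\alpha)}$. Rates: $Y+S_{j-1}\to U_j$: $a_j$; $U_j\to Y+S_{j-1}$: $b_j$; $U_j\to Y+S_j$: $c_j$; $\widetilde Y+S_j\to V_j$: $\tilde a_j$; $V_j\to\widetilde Y+S_j$: $\tilde b_j$; $V_j\to\widetilde Y+S_{j-1}$: $\tilde c_j$ ($1\le j\le L$). *)

(* Defs.v *)
From HB Require Import structures.
From mathcomp Require Import all_boot all_order all_algebra.
Set Implicit Arguments. Unset Strict Implicit. Unset Printing Implicit Defensive.
Import Order.TTheory GRing.Theory Num.Theory.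
Local Open Scope ring_scope.

(* A network satisfying the shape part of (H1) is given by its components:
   component c has enzyme [enz c], length [len c], non-intermediate substrates
   [sub c 0], ..., [sub c (len c)] and intermediates [intm c 1], ...,
   [intm c (len c)], with reactions (for 1 <= j <= len c)
     enz c + sub c (j-1) -> intm c j      (label (c, j, 0), "a_j")
     intm c j -> enz c + sub c (j-1)      (label (c, j, 1), "b_j")
     intm c j -> enz c + sub c j          (label (c, j, 2), "c_j").  *)
Record network (S C : finType) := Network {
  len : C -> nat;
  enz : C -> S;
  sub : C -> nat -> S;
  intm : C -> nat -> S }.

Section Net.
Variables (S C : finType) (N : network S C).

Definition cplx1 (a : S) : {ffun S -> nat} := [ffun x => nat_of_bool (x == a)].
Definition cplx2 (a b : S) : {ffun S -> nat} :=
  [ffun x => (nat_of_bool (x == a) + nat_of_bool (x == b))%N].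

(* rate constant labels: (component, step j, kind 0=a / 1=b / 2=c) *)
Definition label := (C * nat * nat)%type.

Definition reaction := (label * ({ffun S -> nat} * {ffun S -> nat}))%type.

Definition reactions : seq reaction :=
  flatten [seq flatten [seq
     [:: ((c, j, 0%N), (cplx2 (enz N c) (sub N c j.-1), cplx1 (intm N c j)));
         ((c, j, 1%N), (cplx1 (intm N c j), cplx2 (enz N c) (sub N c j.-1)));
         ((c, j, 2%N), (cplx1 (intm N c j), cplx2 (enz N c) (sub N c j)))]
     | j <- iota 1 (len N c)] | c <- enum C].

Definition H1 : Prop :=
  (forall c, (1 <= len N c)%N) /\
      (forall c j, (j <= len N c)%N -> enz N c <> sub N c j) /\
      (forall c j j', (j <= len N c)%N -> (j' <= len N c)%N ->
          sub N c j = sub N c j' -> j = j') /\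
      (forall c j c' j', (1 <= j <= len N c)%N -> (1 <= j' <= len N c')%N ->
          intm N c j = intm N c' j' -> c = c' /\ j = j') /\
      (forall c j c', (1 <= j <= len N c)%N -> intm N c j <> enz N c') /\
      (forall c j c' j', (1 <= j <= len N c)%N -> (j' <= len N c')%N ->
          intm N c j <> sub N c' j') /\
      (forall c j c' j', c <> c' -> (j <= len N c)%N -> (j' <= len N c')%N ->
          cplx2 (enz N c) (sub N c j) <> cplx2 (enz N c') (sub N c' j')).

Definition is_intermediate (x : S) : Prop :=
  exists c j, (1 <= j <= len N c)%N /\ x = intm N c j.

(* (H2): partition S^(0) |_| ... |_| S^(M) given by a class function *)
Definition H2 : Prop :=
  exists (M : nat) (cls : S -> nat),
  [/\ (2 <= M)%N,
      (forall x, (cls x <= M)%N),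
      (forall a, (a <= M)%N -> exists x, cls x = a),
      (forall x, cls x = 0%N <-> is_intermediate x) &
      (forall c, exists alpha, (1 <= alpha)%N /\
          (forall j, (j <= len N c)%N -> cls (sub N c j) = alpha) /\
          cls (enz N c) <> alpha)].

(* Polynomials in the concentrations with coefficients polynomials (over Z)
   in the rate constants: a list of terms (integer, species exponent,
   multiset of rate labels). *)
Definition term := (int * ({ffun S -> nat} * seq label))%type.
Definition rpoly := seq term.

Definition coef (p : rpoly) (m : {ffun S -> nat}) (e : seq label) : int :=
  \sum_(t <- p | (t.2.1 == m) && perm_eq t.2.2 e) t.1.

(* the monomial x^m appears: its coefficient is a nonzero polynomial in the
   rate constants *)
Definition appears (p : rpoly) (m : {ffun S -> nat}) : Prop :=
  exists e, coef p m e <> 0.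

(* total derivative along the mass-action system:
   phi' = sum_i d phi/d x_i * sum_{y->y'} k_{yy'} x^y (y'_i - y_i) *)
Definition lie_term (t : term) : rpoly :=
  flatten [seq [seq (t.1 * (t.2.1 i)%:R * ((r.2.2 i)%:R - (r.2.1 i)%:R),
                     ([ffun x => (t.2.1 x - nat_of_bool (x == i) + r.2.1 x)%N],
                      r.1 :: t.2.2))
                | r : reaction <- reactions] | i <- enum S].

Definition lie (p : rpoly) : rpoly := flatten (map lie_term p).

Definition var (x : S) : rpoly := [:: (1, (cplx1 x, [::]))].

End Net.

(* Main.v *)
Require Import Defs.
From HB Require Import structures.
From mathcomp Require Import all_boot all_order all_algebra.
From mathcomp Require Import zify.
Import Order.TTheory GRing.Theory Num.Theory.
Local Open Scope ring_scope.

Section Gen.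
Variables (S C : finType) (N : network S C).

Definition cterm (u : term S C) (i : S) (r : reaction S C) : term S C :=
  (u.1 * (u.2.1 i)%:R * ((r.2.2 i)%:R - (r.2.1 i)%:R),
   ([ffun x => (u.2.1 x - nat_of_bool (x == i) + r.2.1 x)%N], r.1 :: u.2.2)).

Lemma lie_termE u : lie_term N u =
  flatten [seq [seq cterm u i r | r <- reactions N] | i <- enum S].
Proof. by []. Qed.

Lemma lie_cat p q : lie N (p ++ q) = lie N p ++ lie N q.
Proof. by rewrite /lie map_cat flatten_cat. Qed.

Lemma iter_cat d p q : iter d (lie N) (p ++ q) = iter d (lie N) p ++ iter d (lie N) q.
Proof. by elim: d => //= d ->; rewrite lie_cat. Qed.

Lemma iter_flat d p : iter d (lie N) p = flatten [seq iter d (lie N) [:: u] | u <- p].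
Proof.
elim: p => [|u p IH]; first by elim: d => //= d ->.
by rewrite -cat1s iter_cat IH.
Qed.

Lemma iterS1 d u : iter d.+1 (lie N) [:: u] = iter d (lie N) (lie_term N u).
Proof. by rewrite iterSr /lie /= cats0. Qed.

Lemma coef_cat (p q : rpoly S C) m e : coef (p ++ q) m e = coef p m e + coef q m e.
Proof. by rewrite /coef big_cat. Qed.

Lemma coef_flat (ps : seq (rpoly S C)) m e : coef (flatten ps) m e = \sum_(p <- ps) coef p m e.
Proof.
elim: ps => [|p ps IH]; first by rewrite /coef !big_nil.
by rewrite /= coef_cat IH big_cons.
Qed.

Lemma coef_iterS d u m e : coef (iter d.+1 (lie N) [:: u]) m e =
  \sum_(i <- enum S) \sum_(r <- reactions N) coef (iter d (lie N) [:: cterm u i r]) m e.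
Proof.
rewrite iterS1 iter_flat coef_flat big_map lie_termE big_flatten /= big_map.
by apply: eq_bigr => i _; rewrite big_map.
Qed.

Definition step (m m' : {ffun S -> nat}) := exists i r, r \in reactions N /\
  (0 < m i)%N /\ r.2.2 i != r.2.1 i /\ m' = [ffun x => (m x - nat_of_bool (x == i) + r.2.1 x)%N].

Fixpoint reachn d (m m' : {ffun S -> nat}) : Prop :=
  match d with 0 => m' = m | d.+1 => exists m1, step m m1 /\ reachn d m1 m' end.

Lemma cterm_step u i r : r \in reactions N -> (cterm u i r).1 != 0 ->
  u.1 != 0 /\ step u.2.1 (cterm u i r).2.1.
Proof.
move=> hr; rewrite /cterm /= !mulf_eq0 !negb_or subr_eq0 eqr_nat pnatr_eq0 -lt0n.
case/andP=> /andP [-> hi] hne; split=> //; by exists i, r.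
Qed.

Lemma nz_reach d u t : t \in iter d (lie N) [:: u] -> t.1 != 0 ->
  u.1 != 0 /\ reachn d u.2.1 t.2.1.
Proof.
elim: d u => [|d IH] u; first by rewrite /= inE => /eqP -> ->.
rewrite iterS1 iter_flat => /flattenP [p /mapP [v hv hp] ht] hnz; subst p.
have [hv1 hr] := IH v ht hnz.
move: hv; rewrite lie_termE => /flattenP [q /mapP [i _ hq]]; subst q => /mapP [r hr' hvr]; subst v.
have [hu hs] := cterm_step u i r hr' hv1; split=> //; by exists (cterm u i r).2.1.
Qed.

Lemma coefZ0 d u m e : (u.1 = 0 \/ ~ reachn d u.2.1 m) ->
  coef (iter d (lie N) [:: u]) m e = 0.
Proof.
move=> H; rewrite /coef big1_seq // => t /andP [/andP [/eqP hm _] ht].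
apply/eqP; apply/negPn/negP => hnz.
have [hu hr] := nz_reach d u t ht hnz.
by case: H => [/eqP|]; [rewrite (negbTE hu) | rewrite -hm].
Qed.

Lemma coef_single (v : term S C) m e : coef [:: v] m e =
  if (v.2.1 == m) && perm_eq v.2.2 e then v.1 else 0.
Proof. by rewrite /coef big_cons big_nil; case: ifP => //; rewrite addr0. Qed.


Definition RA c j : reaction S C :=
  ((c, j, 0%N), (cplx2 (enz N c) (sub N c j.-1), cplx1 (intm N c j))).
Definition RB c j : reaction S C :=
  ((c, j, 1%N), (cplx1 (intm N c j), cplx2 (enz N c) (sub N c j.-1))).
Definition RC c j : reaction S C :=
  ((c, j, 2%N), (cplx1 (intm N c j), cplx2 (enz N c) (sub N c j))).

Lemma mem_reactions r : r \in reactions N <->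
  exists c j, (1 <= j <= len N c)%N /\ (r = RA c j \/ r = RB c j \/ r = RC c j).
Proof.
split.
  move=> /flattenP [p /mapP [c _ hp]]; subst p => /flattenP [q /mapP [j hj hq]]; subst q.
  move: hj; rewrite mem_iota => hj.
  have hj' : (1 <= j <= len N c)%N by move: hj; rewrite addnC addn1 ltnS.
  rewrite !inE => H; exists c, j; split=> //.
  by case/orP: H => [/eqP ->|/orP [/eqP ->|/eqP ->]]; [left|right;left|right;right].
move=> [c [j [hj H]]]; apply/flattenP.
exists (flatten [seq [:: RA c j0; RB c j0; RC c j0] | j0 <- iota 1 (len N c)]).
  by apply/mapP; exists c; rewrite ?mem_enum.
apply/flattenP; exists [:: RA c j; RB c j; RC c j].
  apply/mapP; exists j => //; rewrite mem_iota addnC addn1 ltnS //.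
by rewrite !inE; case: H => [->|[->|->]]; rewrite eqxx ?orbT.
Qed.

Lemma uniq_flat_key (T1 T2 : eqType) (s : seq T1) (f : T1 -> seq T2) (key : T2 -> T1) :
  uniq s -> (forall x, x \in s -> uniq (f x)) -> (forall x z, z \in f x -> key z = x) ->
  uniq (flatten (map f s)).
Proof.
elim: s => [|x s IH] //= /andP [hx hs] hu hk.
rewrite cat_uniq hu ?mem_head //= IH // ?andbT; last by move=> y hy; apply: hu; rewrite inE hy orbT.
apply/hasP => [[z /flattenP [p /mapP [y hy hp] hz] hzx]]; subst p.
move: (hk _ _ hz) (hk _ _ hzx) => e1 e2; rewrite -e1 e2 in hy.
by rewrite hy in hx.
Qed.

Lemma uniq_reactions : uniq (reactions N).
Proof.
apply: (@uniq_flat_key _ _ _ _ (fun z : reaction S C => z.1.1.1)).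
- exact: enum_uniq.
- move=> c _; apply: (@uniq_flat_key _ _ _ _ (fun z : reaction S C => z.1.1.2)).
  + exact: iota_uniq.
  + move=> j _; apply: (@map_uniq _ _ (fun z : reaction S C => z.1.2)) => /=.
    by [].
  + by move=> j z; rewrite !inE => /orP [/eqP ->|/orP [/eqP ->|/eqP ->]].
- move=> c z /flattenP [p /mapP [j _ hp] hz]; subst p.
  by move: hz; rewrite !inE => /orP [/eqP ->|/orP [/eqP ->|/eqP ->]].
Qed.

Lemma coef_one d u m e i0 r0 : r0 \in reactions N ->
  (forall i r, r \in reactions N -> (i, r) != (i0, r0) ->
     coef (iter d (lie N) [:: cterm u i r]) m e = 0) ->
  coef (iter d.+1 (lie N) [:: u]) m e = coef (iter d (lie N) [:: cterm u i0 r0]) m e.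
Proof.
move=> hr0 H; rewrite coef_iterS (bigD1_seq i0) ?mem_enum ?enum_uniq //=.
rewrite [X in _ + X]big1_seq ?addr0; last first.
  move=> i /andP [hi _]; rewrite big1_seq // => r /andP [_ hr].
  by apply: H => //; rewrite xpair_eqE negb_and hi.
rewrite (bigD1_seq r0) //= ?uniq_reactions // [X in _ + X]big1_seq ?addr0 // => r /andP [hr hr'].
by apply: H => //; rewrite xpair_eqE eqxx hr.
Qed.

End Gen.
Arguments cterm {S C} u i r.
Arguments step {S C} N m m'.
Arguments reachn {S C} N d m m'.
Arguments RA {S C} N c j.
Arguments RB {S C} N c j.
Arguments RC {S C} N c j.

Local Close Scope ring_scope.
Set Implicit Arguments. Unset Strict Implicit.
Section Main.
Variables (S C : finType) (N : network S C).
Hypothesis hH1 : H1 N.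
Hypothesis hH2 : H2 N.
Variables (c1 c2 : C).
Hypothesis hc : c1 <> c2.
Variable L : nat.
Hypothesis hL : (1 <= L)%N.
Hypothesis hlen1 : len N c1 = L.
Hypothesis hlen2 : len N c2 = L.
Hypothesis hsub : forall j, (j <= L)%N -> sub N c2 j = sub N c1 (L - j).
Variables n k : nat.
Hypothesis hn : (1 <= n <= L)%N.
Hypothesis hk : (k < n)%N.

Local Notation Y := (enz N c1).
Local Notation Yt := (enz N c2).
Local Notation Sb i := (sub N c1 i).
Local Notation U i := (intm N c1 i).
Local Notation J := (L - (n - k) + 1)%N.
Local Notation V := (intm N c2 J).

Lemma F2 c j : (j <= len N c)%N -> enz N c <> sub N c j.
Proof. by case: hH1 => _ [H _] /H. Qed.
Lemma sub_inj c j j' : (j <= len N c)%N -> (j' <= len N c)%N -> sub N c j = sub N c j' -> j = j'.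
Proof. by case: hH1 => _ [_ [H _]]; apply: H. Qed.
Lemma intm_inj c j c' j' : (1 <= j <= len N c)%N -> (1 <= j' <= len N c')%N ->
  intm N c j = intm N c' j' -> c = c' /\ j = j'.
Proof. by case: hH1 => _ [_ [_ [H _]]]; apply: H. Qed.
Lemma intm_enz c j c' : (1 <= j <= len N c)%N -> intm N c j <> enz N c'.
Proof. by case: hH1 => _ [_ [_ [_ [H _]]]]; apply: H. Qed.
Lemma intm_sub c j c' j' : (1 <= j <= len N c)%N -> (j' <= len N c')%N -> intm N c j <> sub N c' j'.
Proof. by case: hH1 => _ [_ [_ [_ [_ [H _]]]]]; apply: H. Qed.
Lemma cplx_uniq c j c' j' : c <> c' -> (j <= len N c)%N -> (j' <= len N c')%N ->
  cplx2 (enz N c) (sub N c j) <> cplx2 (enz N c') (sub N c' j').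
Proof. by case: hH1 => _ [_ [_ [_ [_ [_ H]]]]]; apply: H. Qed.

Lemma D1 i : (i <= L)%N -> Y <> Sb i.
Proof. by move=> hi; apply: F2; rewrite hlen1. Qed.

Lemma D2 c j i : enz N c = Y -> (j <= len N c)%N -> (i <= L)%N -> sub N c j = Sb i -> c = c1.
Proof.
move=> he hj hi hs; case: (eqVneq c c1) => // /eqP hne.
by case: (cplx_uniq hne hj (_ : (i <= len N c1)%N)); rewrite ?hlen1 // he hs.
Qed.

Lemma Dcls c j j' i : (j <= len N c)%N -> (j' <= len N c)%N -> (i <= L)%N ->
  sub N c j = Sb i -> sub N c j' <> Y.
Proof.
move=> hj hj' hi hs hY.
case: hH2 => M [cls [_ _ _ _ hcls]].
case: (hcls c) => a [_ [ha _]]; case: (hcls c1) => a1 [_ [ha1 hne]].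
have e1 : cls (Sb i) = a1 by apply: ha1; rewrite hlen1.
have e2 : cls (sub N c j) = a by apply: ha.
have e3 : cls (sub N c j') = a by apply: ha.
by apply: hne; rewrite -hY e3 -e2 hs e1.
Qed.

Lemma hsubE i : (i <= L)%N -> sub N c2 (L - i) = Sb i.
Proof. by move=> hi; rewrite hsub ?leq_subr // subKn. Qed.

Lemma D4 i : (i <= L)%N -> Yt <> Sb i.
Proof. by move=> hi; rewrite -hsubE //; apply: F2; rewrite hlen2 leq_subr. Qed.

Lemma D6 : Yt <> Y.
Proof.
move=> h; apply: (@cplx_uniq c2 0 c1 L) => //; first by move/esym.
  by rewrite hlen1.
by rewrite h hsub // subn0.
Qed.

Lemma hJ : (1 <= J <= L)%N.
Proof. lia. Qed.
Lemma hJ1 : sub N c2 J.-1 = Sb (n - k).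
Proof. rewrite -hsubE; last by lia. by congr (sub _ _ _); lia. Qed.
Lemma hJ2 : sub N c2 J = Sb (n - k).-1.
Proof. rewrite -hsubE; last by lia. by congr (sub _ _ _); lia. Qed.


Definition mk (b : nat) (x : S) : {ffun S -> nat} :=
  [ffun z => (nat_of_bool (z == Y) * b + nat_of_bool (z == x))%N].
Definition addY (b : nat) (y : {ffun S -> nat}) : {ffun S -> nat} :=
  [ffun z => (nat_of_bool (z == Y) * b + y z)%N].
Definition bad (f : {ffun S -> nat}) : nat := (\sum_(z | z != Y) f z)%N.

Lemma sum_ind w : (\sum_(z | z != Y) nat_of_bool (z == w))%N = nat_of_bool (w != Y).
Proof.
case: (eqVneq w Y) => [->|hw].
  by rewrite big1 // => z hz; rewrite (negbTE hz).
by rewrite (bigD1 w) //= eqxx big1 // => z /andP [_ hz]; rewrite (negbTE hz).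
Qed.

Lemma bad_cplx1 w : bad (cplx1 w) = nat_of_bool (w != Y).
Proof. by rewrite /bad -sum_ind; apply: eq_bigr => z _; rewrite ffunE. Qed.

Lemma bad_cplx2 a b : bad (cplx2 a b) = (nat_of_bool (a != Y) + nat_of_bool (b != Y))%N.
Proof.
by rewrite /bad -!sum_ind -big_split /=; apply: eq_bigr => z _; rewrite ffunE.
Qed.

Lemma bad_addY b y : bad (addY b y) = bad y.
Proof. by apply: eq_bigr => z hz; rewrite ffunE (negbTE hz). Qed.

Lemma mkE b x : mk b x = addY b (cplx1 x).
Proof. by apply/ffunP => z; rewrite !ffunE. Qed.

Lemma bad_mk b x : x != Y -> bad (mk b x) = 1%N.
Proof. by move=> hx; rewrite mkE bad_addY bad_cplx1 hx. Qed.

Lemma upd_mk b x (y : {ffun S -> nat}) : x != Y ->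
  [ffun z => (mk b x z - nat_of_bool (z == x) + y z)%N] = addY b y.
Proof. by move=> hx; apply/ffunP => z; rewrite !ffunE addnK. Qed.

Lemma addY_c2l b w : addY b (cplx2 Y w) = mk b.+1 w.
Proof. apply/ffunP => z; rewrite !ffunE; case: (z == Y); case: (z == w) => /=; lia. Qed.
Lemma addY_c2r b w : addY b (cplx2 w Y) = mk b.+1 w.
Proof. apply/ffunP => z; rewrite !ffunE; case: (z == Y); case: (z == w) => /=; lia. Qed.
Lemma addY_c1 b w : addY b (cplx1 w) = mk b w.
Proof. by rewrite mkE. Qed.

Lemma mk_inj b x b' x' : x != Y -> x' != Y -> mk b x = mk b' x' -> b = b' /\ x = x'.
Proof.
move=> hx hx' /ffunP H; move: (H Y) (H x); rewrite !ffunE !eqxx /=.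
rewrite [Y == x]eq_sym [Y == x']eq_sym (negbTE hx) (negbTE hx') /= !mul1n !addn0 => ->.
by case: eqP => // _ /eqP; rewrite eqn_add2l.
Qed.

Lemma mk_pos b x i : (0 < mk b x i)%N -> i = Y \/ i = x.
Proof. by rewrite ffunE; case: eqP => [|_]; [left|case: eqP => //; right]. Qed.

Lemma mk_x b x : x != Y -> mk b x x = 1%N.
Proof. by move=> hx; rewrite ffunE (negbTE hx) eqxx. Qed.

Lemma cplx1_mk x : cplx1 x = mk 0 x.
Proof. by apply/ffunP => z; rewrite !ffunE muln0. Qed.

Lemma bad_reactant r : r \in reactions N -> (1 <= bad r.2.1)%N.
Proof.
case/mem_reactions => c [j [hj [->|[->|->]]]] /=.
- rewrite bad_cplx2; case: eqP => he; case: eqP => hs //=.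
  by case: (F2 (_ : (j.-1 <= len N c)%N)); [lia| rewrite he hs].
- by rewrite bad_cplx1; case: eqP => // h; case: (intm_enz hj h).
- by rewrite bad_cplx1; case: eqP => // h; case: (intm_enz hj h).
Qed.

Lemma bad_step (m : {ffun S -> nat}) (i : S) r : r \in reactions N -> (0 < m i)%N ->
  (bad m + nat_of_bool (i == Y) <= bad [ffun z => (m z - nat_of_bool (z == i) + r.2.1 z)%N])%N.
Proof.
move=> hr hi.
have -> : bad [ffun z => (m z - nat_of_bool (z == i) + r.2.1 z)%N] =
   (\sum_(z | z != Y) (m z - nat_of_bool (z == i)) + bad r.2.1)%N.
  by rewrite /bad -big_split; apply: eq_bigr => z _; rewrite ffunE.
have -> : bad m = (\sum_(z | z != Y) (m z - nat_of_bool (z == i)) + nat_of_bool (i != Y))%N.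
  rewrite -sum_ind /bad -big_split; apply: eq_bigr => z _ /=.
  by case: eqP => [->|]; rewrite ?subn0 ?addn0 // subnK.
have := bad_reactant hr; case: (i == Y); case: (i != Y) => /=; lia.
Qed.

Lemma reach_bad d m m' : reachn N d m m' -> (bad m <= bad m')%N.
Proof.
elim: d m => [m /= ->|d IH m [m1 [[i [r [hr [hi [_ ->]]]]] h]]] //.
apply: leq_trans (IH _ h); apply: leq_trans (bad_step hr hi); exact: leq_addr.
Qed.


Lemma ncgen (x a b w : S) :
  nat_of_bool (x == w) != (nat_of_bool (x == a) + nat_of_bool (x == b))%N ->
  x = a \/ x = b \/ x = w.
Proof.
move=> H; case: (eqVneq x a) => [|h1]; first by left.
case: (eqVneq x b) => [|h2]; first by right; left.
case: (eqVneq x w) => [|h3]; first by right; right.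
by move: H; rewrite (negbTE h1) (negbTE h2) (negbTE h3).
Qed.

Lemma ncA c j x : (RA N c j).2.2 x != (RA N c j).2.1 x ->
  x = enz N c \/ x = sub N c j.-1 \/ x = intm N c j.
Proof. rewrite /= !ffunE; exact: ncgen. Qed.
Lemma ncB c j x : (RB N c j).2.2 x != (RB N c j).2.1 x ->
  x = enz N c \/ x = sub N c j.-1 \/ x = intm N c j.
Proof. rewrite /= !ffunE => H; apply: ncgen; by rewrite eq_sym. Qed.
Lemma ncC c j x : (RC N c j).2.2 x != (RC N c j).2.1 x ->
  x = enz N c \/ x = sub N c j \/ x = intm N c j.
Proof. rewrite /= !ffunE => H; apply: ncgen; by rewrite eq_sym. Qed.

Lemma inter_react c0 j0 r : (1 <= j0 <= len N c0)%N -> r \in reactions N ->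
  r.2.2 (intm N c0 j0) != r.2.1 (intm N c0 j0) ->
  r = RA N c0 j0 \/ r = RB N c0 j0 \/ r = RC N c0 j0.
Proof.
move=> hj0 /mem_reactions [c [j [hj hr]]].
have key : intm N c0 j0 = intm N c j -> c0 = c /\ j0 = j by apply: intm_inj.
case: hr => [->|[->|->]].
- case/ncA => [/(intm_enz hj0)|[/(intm_sub hj0)|/key [-> ->]]] //; [|by auto].
  by move/(_ (_ : (j.-1 <= len N c)%N)) => H; case: H; lia.
- case/ncB => [/(intm_enz hj0)|[/(intm_sub hj0)|/key [-> ->]]] //; [|by auto].
  by move/(_ (_ : (j.-1 <= len N c)%N)) => H; case: H; lia.
- case/ncC => [/(intm_enz hj0)|[/(intm_sub hj0)|/key [-> ->]]] //; [|by auto].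
  by move/(_ (_ : (j <= len N c)%N)) => H; case: H; lia.
Qed.

Lemma bud_mk b x E Sx : x != Y -> E <> Sx -> (x = E \/ x = Sx) ->
  (bad (addY b (cplx2 E Sx)) <= 1)%N -> addY b (cplx2 E Sx) = mk b.+1 x.
Proof.
move=> hx hES hxES; rewrite bad_addY bad_cplx2.
case: (eqVneq E Y) => [hE|hE]; case: (eqVneq Sx Y) => [hS|hS] //= _.
- by case: hES; rewrite hE hS.
- subst E; case: hxES => [hxY|->]; [by rewrite hxY eqxx in hx|exact: addY_c2l].
- subst Sx; case: hxES => [->|hxY]; [exact: addY_c2r|by rewrite hxY eqxx in hx].
Qed.

Definition Live (x : S) (H B : nat) : Prop :=
 (exists i, (i <= n)%N /\ x = Sb i /\ H = (4*(n-i)+2)%N /\ B = (n-i+1)%N) \/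
 (exists i, (1 <= i <= n)%N /\ x = U i /\ H = (4*(n-i)+4)%N /\ B = (n-i+1)%N) \/
 ((n.+1 <= L)%N /\ x = U n.+1 /\ H = 0%N /\ B = 0%N) \/
 (exists c j i, (1 <= j <= len N c)%N /\ sub N c j.-1 = Y /\ enz N c = Sb i /\
     (i <= n)%N /\ x = intm N c j /\ H = (4*(n-i)+3)%N /\ B = (n-i+1)%N) \/
 (x = V /\ H = (4*k+4)%N /\ B = (k+1)%N).

Definition Inv (s t b : nat) (x : S) : Prop := exists H B, Live x H B /\
  (B <= b+1)%N /\ (H + 2*b <= 2*t + 2*B)%N /\ (H + s <= 2*t + 2)%N.

Definition dead (x : S) : Prop := exists c j, (1 <= j <= len N c)%N /\
  x = intm N c j /\ enz N c <> Y /\ sub N c j.-1 <> Y /\ x <> V.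

Definition tight (b : nat) (x : S) (r : reaction S C) (b' : nat) (x' : S) : Prop :=
  (exists i, (1 <= i <= L)%N /\ x = Sb i /\ r = RC N c1 i /\ x' = U i /\ b' = b) \/
  (exists i, (1 <= i <= L)%N /\ x = U i /\ r = RA N c1 i /\ x' = Sb i.-1 /\ b' = b.+1) \/
  (x = Sb (n-k) /\ r = RB N c2 J /\ x' = V /\ b' = b).

Definition Out s t b x r (m1 : {ffun S -> nat}) : Prop :=
  (exists x', m1 = mk b x' /\ dead x') \/
  (exists b' x', m1 = mk b' x' /\ Inv s.+1 t.+1 b' x') \/
  (exists b' x', m1 = mk b' x' /\ Inv s t.+1 b' x' /\ tight b x r b' x').

Lemma Inv_waste s t b x : Inv s t b x -> Inv s.+1 t.+1 b x.
Proof. move=> [H [B [hl [h1 [h2 h3]]]]]; exists H, B; split=> //; lia. Qed.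
Lemma Inv_bud s t b x : Inv s t b x -> Inv s.+1 t.+1 b.+1 x.
Proof. move=> [H [B [hl [h1 [h2 h3]]]]]; exists H, B; split=> //; lia. Qed.
Lemma Inv_weak s t b x : Inv s.+1 t b x -> Inv s t b x.
Proof. move=> [H [B [hl [h1 [h2 h3]]]]]; exists H, B; split=> //; lia. Qed.

Lemma Live_nY x H B : Live x H B -> x != Y.
Proof.
have hn' : (n <= L)%N by case/andP: hn.
case=> [[i [hi [-> _]]]|[[i [hi [-> _]]]|[[h1 [-> _]]|[[c [j [i [hj [_ [_ [_ [-> _]]]]]]]]|[-> _]]]]].
- apply/eqP => h; apply: (D1 (_ : (i <= L)%N)); [lia|by rewrite h].
- by apply/eqP; apply: intm_enz; rewrite hlen1; lia.
- by apply/eqP; apply: intm_enz; rewrite hlen1; lia.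
- by apply/eqP; apply: intm_enz.
- by apply/eqP; apply: intm_enz; rewrite hlen2; exact: hJ.
Qed.


Lemma hnL : (n <= L)%N.
Proof. by case/andP: hn. Qed.

Lemma sY i : (i <= L)%N -> Sb i != Y.
Proof. by move=> hi; apply/eqP => h; apply: (D1 hi); rewrite h. Qed.

Lemma enz_case s t b i c j r : (i <= n)%N -> (n - i + 1 <= b + 1)%N ->
  (4*(n-i)+2 + 2*b <= 2*t + 2*(n-i+1))%N -> (4*(n-i)+2 + s <= 2*t + 2)%N ->
  (1 <= j <= len N c)%N -> enz N c = Sb i -> Out s t b (Sb i) r (mk b (intm N c j)).
Proof.
move=> hi h1 h2 h3 hj he.
case: (eqVneq (sub N c j.-1) Y) => [hs|hs].
  right; left; exists b, (intm N c j); split=> //.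
  exists (4*(n-i)+3)%N, (n-i+1)%N; split; last by lia.
  by do 3 right; left; exists c, j, i.
left; exists (intm N c j); split=> //; exists c, j; split=> //; split=> //.
split; first by rewrite he; apply/eqP; apply: sY; move: hnL; lia.
split; first by apply/eqP.
move=> /intm_inj [] // ; first by rewrite hlen2; exact: hJ.
move=> hcc _; subst c; apply: (D4 (_ : (i <= L)%N)); [move: hnL; lia|done].
Qed.

Lemma trans_S s t b i r : (i <= n)%N -> (n - i + 1 <= b + 1)%N ->
  (4*(n-i)+2 + 2*b <= 2*t + 2*(n-i+1))%N -> (4*(n-i)+2 + s <= 2*t + 2)%N ->
  r \in reactions N -> r.2.2 (Sb i) != r.2.1 (Sb i) -> (bad (addY b r.2.1) <= 1)%N ->
  Out s t b (Sb i) r (addY b r.2.1).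
Proof.
move=> hi h1 h2 h3 hr hnc hbad.
have hiL : (i <= L)%N by move: hnL; lia.
have hiL' : (i <= len N c1)%N by rewrite hlen1.
have hInt c j : (1 <= j <= len N c)%N -> Sb i <> intm N c j.
  by move=> hj e; apply: (intm_sub hj hiL'); rewrite e.
case/mem_reactions: hr hnc hbad => c [j [hj [->|[->|->]]]] /=.
-
  move=> hnc hbad; right; left; exists b.+1, (Sb i); split.
    apply: bud_mk => //; first exact: sY.
      by apply: F2; lia.
    by case/ncA: hnc => [|[|/hInt]]; auto.
  by apply: Inv_bud; exists (4*(n-i)+2)%N, (n-i+1)%N; split=> //; left; exists i.
- move=> hnc _; rewrite addY_c1.
  case/ncB: hnc => [he|[hs|/hInt //]].
    by apply: enz_case => //.
  case: (eqVneq c c1) => [hcc|hcc].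
    subst c; have hji : j.-1 = i by apply: (sub_inj (_ : (j.-1 <= len N c1)%N) hiL' (esym hs)); lia.
    right; left; exists b, (U j); split=> //.
    case: (ltnP i n) => hin.
      exists (4*(n-j)+4)%N, (n-j+1)%N; split; last by lia.
      by right; left; exists j; split=> //; lia.
    exists 0%N, 0%N; split; last by lia.
    do 2 right; left; split; first by rewrite hlen1 in hj; lia.
    by have -> : j = n.+1 by lia.
  case: (eqVneq (intm N c j) V) => [hV|hV].
    have [hc2 hj2] : c = c2 /\ j = J by apply: intm_inj => //; rewrite hlen2; exact: hJ.
    subst c j; have hi2 : i = (n - k)%N.
      apply: (@sub_inj c1); rewrite ?hlen1 //; first by lia.
      by rewrite -hJ1.
    subst i; right; right; exists b, V; split=> //; split.
      exists (4*k+4)%N, (k+1)%N; split; last by lia.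
      by do 4 right.
    by do 2 right.
  left; exists (intm N c j); split=> //; exists c, j; split=> //; split=> //.
  split; first by move=> he; move/eqP: hcc; apply; apply: (D2 he _ hiL (esym hs)); lia.
  split; [rewrite -hs; apply/eqP; exact: sY | exact/eqP].
- move=> hnc _; rewrite addY_c1.
  case/ncC: hnc => [he|[hs|/hInt //]].
    by apply: enz_case => //.
  case: (eqVneq c c1) => [hcc|hcc].
    subst c; have hji : j = i by apply: (sub_inj (_ : (j <= len N c1)%N) hiL' (esym hs)); lia.
    subst j; right; right; exists b, (U i); split=> //; split.
      exists (4*(n-i)+4)%N, (n-i+1)%N; split; last by lia.
      by right; left; exists i; split=> //; lia.
    by left; exists i; split=> //; rewrite hlen1 in hj.
  case: (eqVneq (intm N c j) V) => [hV|hV].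
    have [hc2 hj2] : c = c2 /\ j = J by apply: intm_inj => //; rewrite hlen2; exact: hJ.
    subst c j; have hi2 : i = (n - k).-1.
      apply: (@sub_inj c1); rewrite ?hlen1 //; first by lia.
      by rewrite -hJ2.
    subst i; right; left; exists b, V; split=> //.
    exists (4*k+4)%N, (k+1)%N; split; last by lia.
    by do 4 right.
  left; exists (intm N c j); split=> //; exists c, j; split=> //; split=> //.
  split; first by move=> he; move/eqP: hcc; apply; apply: (D2 he _ hiL (esym hs)); case/andP: hj.
  split; last exact/eqP.
  apply: (Dcls (_ : (j <= len N c)%N) _ hiL (esym hs)); case/andP: hj => //; lia.
Qed.


Lemma waste_case s t b c0 j0 r : (1 <= j0 <= len N c0)%N -> Inv s t b (intm N c0 j0) ->
  (r = RB N c0 j0 \/ r = RC N c0 j0) -> Out s t b (intm N c0 j0) r (addY b r.2.1).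
Proof.
move=> hj hI hr; right; left; exists b, (intm N c0 j0); split; last exact: Inv_waste.
by case: hr => ->; rewrite addY_c1.
Qed.

Lemma trans_U s t b i r : (1 <= i <= L)%N -> Inv s t b (U i) ->
  (exists H B, ((1 <= i <= n)%N /\ H = (4*(n-i)+4)%N /\ B = (n-i+1)%N \/
                 i = n.+1 /\ H = 0%N /\ B = 0%N) /\
     (B <= b+1)%N /\ (H + 2*b <= 2*t + 2*B)%N /\ (H + s <= 2*t + 2)%N) ->
  r \in reactions N -> r.2.2 (U i) != r.2.1 (U i) ->
  Out s t b (U i) r (addY b r.2.1).
Proof.
move=> hi hI [H [B [hHB [h1 [h2 h3]]]]] hr hnc.
have hi' : (1 <= i <= len N c1)%N by rewrite hlen1.
case: (inter_react hi' hr hnc) => [->|hr']; last exact: waste_case.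
rewrite /= addY_c2l; right; right; exists b.+1, (Sb i.-1); split=> //; split.
  exists (4*(n-i.-1)+2)%N, (n-i.-1+1)%N; split; last by case: hHB => [[? [? ?]]|[? [? ?]]]; lia.
  left; exists i.-1; split=> //; case: hHB => [[? _]|[-> _]]; lia.
by right; left; exists i.
Qed.

Lemma trans_W s t b c0 j0 i r : (1 <= j0 <= len N c0)%N -> sub N c0 j0.-1 = Y ->
  enz N c0 = Sb i -> (i <= n)%N -> Inv s t b (intm N c0 j0) ->
  (n - i + 1 <= b + 1)%N ->
  (4*(n-i)+3 + 2*b <= 2*t + 2*(n-i+1))%N -> (4*(n-i)+3 + s <= 2*t + 2)%N ->
  r \in reactions N -> r.2.2 (intm N c0 j0) != r.2.1 (intm N c0 j0) ->
  Out s t b (intm N c0 j0) r (addY b r.2.1).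
Proof.
move=> hj hs he hi hI h1 h2 h3 hr hnc.
case: (inter_react hj hr hnc) => [->|hr']; last exact: waste_case.
rewrite /= hs he addY_c2r; right; left; exists b.+1, (Sb i); split=> //.
exists (4*(n-i)+2)%N, (n-i+1)%N; split; last by lia.
by left; exists i.
Qed.

Lemma hVJ : (1 <= J <= len N c2)%N.
Proof. rewrite hlen2; exact: hJ. Qed.

Lemma trans_V s t b r : Inv s t b V -> r \in reactions N -> r.2.2 V != r.2.1 V ->
  (bad (addY b r.2.1) <= 1)%N -> Out s t b V r (addY b r.2.1).
Proof.
move=> hI hr hnc hbad.
case: (inter_react hVJ hr hnc) => [hrA|hr']; last exact: (waste_case hVJ hI hr').
move: hbad; rewrite hrA /= bad_addY bad_cplx2 hJ1.
have -> : (Yt != Y) by apply/eqP; exact: D6.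
by rewrite sY //; move: hk hnL; lia.
Qed.

Lemma dead_step b x r : dead x -> r \in reactions N -> r.2.2 x != r.2.1 x ->
  (bad (addY b r.2.1) <= 1)%N -> addY b r.2.1 = mk b x.
Proof.
move=> [c [j [hj [-> [he [hs _]]]]]] hr hnc hbad.
case: (inter_react hj hr hnc) => [hrA|[->|->]]; try by rewrite addY_c1.
move: hbad; rewrite hrA /= bad_addY bad_cplx2.
by move/eqP: he => ->; move/eqP: hs => ->.
Qed.

Lemma trans s t b x r : Inv s t b x -> r \in reactions N -> r.2.2 x != r.2.1 x ->
  (bad (addY b r.2.1) <= 1)%N -> Out s t b x r (addY b r.2.1).
Proof.
move=> hI hr hnc hbad; have hI' := hI; move: hI => [H [B [hl [h1 [h2 h3]]]]].
case: hl => [[i [hi [hx [hH hB]]]]|[[i [hi [hx [hH hB]]]]|[[hnL1 [hx [hH hB]]]|[[c [j [i [hj [hs [he [hi [hx [hH hB]]]]]]]]]|[hx [hH hB]]]]]]; subst x H B.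
- exact: trans_S.
- have hiL : (1 <= i <= L)%N by move: hnL; lia.
  apply: (trans_U hiL hI' _ hr hnc).
  by exists (4*(n-i)+4)%N, (n-i+1)%N; split=> //; left.
- have hiL : (1 <= n.+1 <= L)%N by move: hnL1; lia.
  apply: (trans_U hiL hI' _ hr hnc).
  by exists 0%N, 0%N; split=> //; right.
- exact: (trans_W hj hs he).
- exact: trans_V.
Qed.


Lemma VnY : V != Y.
Proof. by apply/eqP; apply: intm_enz; exact: hVJ. Qed.

Lemma spine_step b x m1 d r' : x != Y -> step N (mk b x) m1 -> reachn N d m1 (mk r' V) ->
  exists r0, [/\ r0 \in reactions N, r0.2.2 x != r0.2.1 x, m1 = addY b r0.2.1 &
                 (bad (addY b r0.2.1) <= 1)%N].
Proof.
move=> hx [i [r [hr [hi [hnc ->]]]]] hre.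
have hb := bad_step hr hi; have := reach_bad hre; rewrite bad_mk ?VnY // => hb1.
rewrite bad_mk // in hb.
have hiY : i != Y by apply/negP => /eqP e; move: hb hb1; rewrite e eqxx /=; lia.
have hix : i = x by case: (mk_pos hi) => // e; rewrite e eqxx in hiY.
subst i; exists r; rewrite upd_mk //; split=> //.
by move: hb1; rewrite upd_mk.
Qed.

Lemma dead_nY x : dead x -> x != Y.
Proof. by move=> [c [j [hj [-> _]]]]; apply/eqP; apply: intm_enz. Qed.

Lemma dead_noreach d b x r' : dead x -> ~ reachn N d (mk b x) (mk r' V).
Proof.
elim: d b => [|d IH] b hd.
  move=> /= /mk_inj [] //; first exact: VnY; first exact: dead_nY.
  by move=> _ e; case: hd => [c [j [_ [_ [_ [_ h]]]]]]; apply: h.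
move=> [m1 [hs hre]].
have [r0 [hr hnc hm hb]] := spine_step (dead_nY hd) hs hre.
by apply: (IH b hd); rewrite hm (dead_step hd hr hnc hb) in hre.
Qed.

Lemma Live_V H B : Live V H B -> H = (4*k+4)%N /\ B = (k+1)%N.
Proof.
case=> [[i [hi [hx _]]]|[[i [hi [hx _]]]|[[hn1 [hx _]]|[[c [j [i [hj [hs [he [hi [hx _]]]]]]]]|[_ h]]]]] //.
- by case: (intm_sub hVJ (_ : (i <= len N c1)%N) hx); rewrite hlen1; move: hnL; lia.
- by case: (intm_inj hVJ (_ : (1 <= i <= len N c1)%N) hx); [rewrite hlen1; move: hnL; lia|move=> /esym].
- by case: (intm_inj hVJ (_ : (1 <= n.+1 <= len N c1)%N) hx); [rewrite hlen1; move: hn1; lia|move=> /esym].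
- case: (intm_inj hVJ hj hx) => e1 e2; subst c j.
  by move: hs; rewrite hJ1 => /eqP; rewrite (negbTE (sY _)) //; move: hk hnL; lia.
Qed.

Lemma Inv_nY s t b x : Inv s t b x -> x != Y.
Proof. by move=> [H [B [hl _]]]; exact: Live_nY hl. Qed.

Lemma main_reach d s t b x r' : Inv s t b x -> reachn N d (mk b x) (mk r' V) ->
  Inv s (t + d) r' V.
Proof.
elim: d s t b x => [|d IH] s t b x hI.
  move=> /= /mk_inj [] //; [exact: VnY|exact: Inv_nY hI|move=> -> ->]; by rewrite addn0.
move=> [m1 [hs hre]].
have [r0 [hr hnc hm hb]] := spine_step (Inv_nY hI) hs hre.
rewrite hm in hre; rewrite -addSnnS.
case: (trans hI hr hnc hb) => [[x' [e hd]]|[[b' [x' [e hI']]]|[b' [x' [e [hI' _]]]]]];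
  rewrite e in hre.
- by case: (dead_noreach hd hre).
- by apply: Inv_weak; apply: IH hre.
- exact: IH hre.
Qed.

Lemma final_bounds s d r' : Inv s d r' V ->
  [/\ (k <= r')%N, (k + 1 + r' <= d)%N & (4*k+4+s <= 2*d+2)%N].
Proof. by move=> [H [B [/Live_V [-> ->] [h1 [h2 h3]]]]]; split; lia. Qed.

Lemma Inv_start : Inv 0 0 0 (Sb n).
Proof. exists 2%N, 1%N; split; last by lia. by left; exists n; split=> //; split=> //; lia. Qed.


Local Notation T := (mk k V).

Lemma cterm_nz (u : term S C) i r : (cterm u i r).1 != 0%R ->
  (0 < u.2.1 i)%N /\ r.2.2 i != r.2.1 i.
Proof.
rewrite /cterm /= !mulf_eq0 !negb_or subr_eq0 eqr_nat pnatr_eq0 -lt0n.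
by case/andP=> /andP [_ hi] hne.
Qed.

Lemma viab t d b x (a : int) ls i r : Inv 0 t b x -> (t + d.+1 = 2*k+1)%N -> r \in reactions N ->
  (cterm (a, (mk b x, ls)) i r).1 != 0%R ->
  reachn N d (cterm (a, (mk b x, ls)) i r).2.1 T ->
  i = x /\ exists b' x', (cterm (a, (mk b x, ls)) i r).2.1 = mk b' x' /\
     tight b x r b' x' /\ reachn N d (mk b' x') T.
Proof.
move=> hI ht hr hnz hre; have [hi hnc] := cterm_nz hnz.
move: hi hnc hre; rewrite /cterm /= => hi hnc hre.
have hx := Inv_nY hI.
have hb := leq_trans (bad_step hr hi) (reach_bad hre); rewrite !bad_mk ?VnY // in hb.
have hiY : i != Y by apply/negP => /eqP e; move: hb; rewrite e eqxx /=; lia.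
have hix : i = x by case: (mk_pos hi) => // e; rewrite e eqxx in hiY.
subst i; split=> //; rewrite upd_mk // in hre *.
have hb1 := reach_bad hre; rewrite bad_mk ?VnY // in hb1.
case: (trans hI hr hnc hb1) => [[x' [e hd]]|[[b' [x' [e hI']]]|[b' [x' [e [hI' htt]]]]]];
  rewrite e in hre.
- by case: (dead_noreach hd hre).
- have := final_bounds (main_reach hI' hre) => [[_ _]]; lia.
- by exists b', x'.
Qed.

Lemma child_SU b i (a : int) ls : (1 <= i <= L)%N ->
  cterm (a, (mk b (Sb i), ls)) (Sb i) (RC N c1 i) = (a, (mk b (U i), (c1, i, 2%N) :: ls)).
Proof.
move=> hi; have hs : Sb i != Y by apply: sY; lia.
rewrite /cterm /= upd_mk // addY_c1 mk_x // !ffunE eqxx (negbTE hs).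
have -> : (Sb i == U i) = false.
  by apply/eqP => e; apply: (intm_sub (_ : (1 <= i <= len N c1)%N) (_ : (i <= len N c1)%N)); rewrite ?hlen1 ?e //; lia.
by rewrite [X in (_ * X)%R](_ : _ = 1%R) // !mulr1.
Qed.

Lemma UnY i : (1 <= i <= L)%N -> U i != Y.
Proof. by move=> hi; apply/eqP; apply: intm_enz; rewrite hlen1. Qed.

Lemma child_US b i (a : int) ls : (1 <= i <= L)%N ->
  cterm (a, (mk b (U i), ls)) (U i) (RA N c1 i) = (a, (mk b.+1 (Sb i.-1), (c1, i, 0%N) :: ls)).
Proof.
move=> hi; have hu := UnY hi; rewrite /cterm /= upd_mk // addY_c2l mk_x //.
rewrite !ffunE eqxx (negbTE hu).
have -> : (U i == Sb i.-1) = false.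
  by apply/eqP; apply: intm_sub; rewrite hlen1 //; lia.
by rewrite [X in (_ * X)%R](_ : _ = 1%R) // !mulr1.
Qed.

Lemma child_SV b (a : int) ls :
  cterm (a, (mk b (Sb (n-k)), ls)) (Sb (n-k)) (RB N c2 J) = (a, (mk b V, (c2, J, 1%N) :: ls)).
Proof.
have hs : Sb (n - k) != Y by apply: sY; move: hnL; lia.
rewrite /cterm /= upd_mk // addY_c1 mk_x // !ffunE hJ1 eqxx.
have -> : (Sb (n-k) == Yt) = false.
  by apply/eqP => e; apply: (D4 (_ : (n - k <= L)%N)); rewrite ?e //; move: hnL; lia.
have -> : (Sb (n-k) == V) = false.
  by apply/eqP => e; apply: (intm_sub hVJ (_ : (n - k <= len N c1)%N)); rewrite ?e // hlen1; move: hnL; lia.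
by rewrite [X in (_ * X)%R](_ : _ = 1%R) // !mulr1.
Qed.


Definition blk (j : nat) : seq (label C) := [:: (c1, (n - j)%N, 0%N); (c1, (n - j)%N, 2%N)].
Definition Lp (p : nat) : seq (label C) :=
  (c2, J, 1%N) :: flatten [seq blk j | j <- rev (iota p (k - p))].

Lemma mem_RB : RB N c2 J \in reactions N.
Proof. by apply/mem_reactions; exists c2, J; split; [exact: hVJ|right; left]. Qed.
Lemma mem_RC i : (1 <= i <= L)%N -> RC N c1 i \in reactions N.
Proof. by move=> hi; apply/mem_reactions; exists c1, i; rewrite hlen1; split=> //; right; right. Qed.
Lemma mem_RA i : (1 <= i <= L)%N -> RA N c1 i \in reactions N.
Proof. by move=> hi; apply/mem_reactions; exists c1, i; rewrite hlen1; split=> //; left. Qed.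

Lemma zero_child d u i r e : ~ ((cterm u i r).1 != 0%R /\ reachn N d (cterm u i r).2.1 T) ->
  coef (iter d (lie N) [:: cterm u i r]) T e = 0%R.
Proof.
move=> H; apply: (@coefZ0 S C N); case: (eqVneq (cterm u i r).1 0%R) => [|h]; first by left.
by right => hr; apply: H.
Qed.

Lemma UneV i : (1 <= i <= L)%N -> U i <> V.
Proof. by move=> hi /intm_inj [] //; [rewrite hlen1|exact: hVJ]. Qed.
Lemma SneU i j : (i <= L)%N -> (1 <= j <= L)%N -> Sb i <> U j.
Proof. by move=> hi hj e; apply: (intm_sub (_ : (1 <= j <= len N c1)%N) (_ : (i <= len N c1)%N)); rewrite ?hlen1 // e. Qed.

Lemma Inv_A p : (p <= k)%N -> Inv 0 (2* p) p (Sb (n-p)).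
Proof.
move=> hp; exists (4* p+2)%N, (p+1)%N; split; last by lia.
left; exists (n-p)%N; split; first by lia. by split=> //; split; lia.
Qed.
Lemma Inv_B p : (p < k)%N -> Inv 0 (2* p+1) p (U (n-p)).
Proof.
move=> hp; exists (4* p+4)%N, (p+1)%N; split; last by lia.
right; left; exists (n-p)%N; split; first by lia. by split=> //; split; lia.
Qed.

Lemma can_last (a : int) ls e :
  coef (iter 1 (lie N) [:: (a, (mk k (Sb (n-k)), ls))]) T e =
  if perm_eq e ((c2, J, 1%N) :: ls) then a else 0%R.
Proof.
rewrite (@coef_one S C N _ _ _ _ (Sb (n-k)) (RB N c2 J) mem_RB).
  by rewrite child_SV /= coef_single eqxx perm_sym.
move=> i r hr hne; apply: zero_child => [[hnz hre]].
have htt : (2*k + 1 = 2*k+1)%N by lia.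
  have := viab (Inv_A (leqnn k)) htt hr hnz hre.
move=> [hix [b' [x' [he [ht hre']]]]]; subst i.
case: ht => [[i' [hi' [hx [_ [hx' _]]]]]|[[i' [hi' [hx _]]]|[_ [hr' _]]]].
- subst x'; move: hre' => /= /mk_inj [] //; [exact: VnY|exact: UnY|move=> _ /esym]; exact: UneV.
- by case: (SneU (_ : (n - k <= L)%N) hi' hx); move: hnL; lia.
- by rewrite hr' eqxx in hne.
Qed.

Lemma blk_split p : (p < k)%N -> Lp p = Lp p.+1 ++ blk p.
Proof.
move=> hp; rewrite /Lp (_ : (k - p = (k - p.+1).+1)%N); last by lia.
by rewrite /= rev_cons map_rcons flatten_rcons.
Qed.

Lemma can_A q : forall p (a : int) ls e, (p + q = k)%N ->
  coef (iter (2*q).+1 (lie N) [:: (a, (mk p (Sb (n-p)), ls))]) T e =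
  if perm_eq e (Lp p ++ ls) then a else 0%R.
Proof.
elim: q => [|q IH] p a ls e hpq.
  rewrite addn0 in hpq; subst p; rewrite muln0 can_last /Lp subnn /=; by [].
have hp : (p < k)%N by lia.
have hiL : (1 <= n - p <= L)%N by move: hnL; lia.
rewrite (_ : (2 * q.+1).+1 = (2*q).+1.+2)%N; last by lia.
rewrite (@coef_one S C N _ _ _ _ (Sb (n-p)) (RC N c1 (n-p)) (mem_RC hiL)); last first.
  move=> i r hr hne; apply: zero_child => [[hnz hre]].
  have htt : (2* p + (2*q).+3 = 2*k+1)%N by lia.
  have := viab (Inv_A (ltnW hp)) htt hr hnz hre.
  move=> [hix [b' [x' [he [ht hre']]]]]; subst i.
  case: ht => [[i' [hi' [hx [hr' _]]]]|[[i' [hi' [hx _]]]|[hx _]]].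
  - have e1 : i' = (n - p)%N.
      by apply: (@sub_inj c1); rewrite ?hlen1 ?hx //; lia.
    by rewrite hr' e1 eqxx in hne.
  - by case: (SneU (_ : (n - p <= L)%N) hi' hx); lia.
  - have : (n - p = n - k)%N by apply: (@sub_inj c1); rewrite ?hlen1 ?hx //; move: hnL; lia.
    lia.
rewrite child_SU //.
rewrite (@coef_one S C N _ _ _ _ (U (n-p)) (RA N c1 (n-p)) (mem_RA hiL)); last first.
  move=> i r hr hne; apply: zero_child => [[hnz hre]].
  have htt : (2* p+1 + (2*q).+2 = 2*k+1)%N by lia.
  have := viab (Inv_B hp) htt hr hnz hre.
  move=> [hix [b' [x' [he [ht hre']]]]]; subst i.
  case: ht => [[i' [hi' [hx _]]]|[[i' [hi' [hx [hr' _]]]]|[hx _]]].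
  - by case: (SneU (_ : (i' <= L)%N) hiL (esym hx)); lia.
  - have e1 : i' = (n - p)%N.
      by case: (intm_inj (_ : (1 <= i' <= len N c1)%N) (_ : (1 <= n - p <= len N c1)%N) (esym hx)); rewrite ?hlen1.
    by rewrite hr' e1 eqxx in hne.
  - by case: (SneU (_ : (n - k <= L)%N) hiL (esym hx)); move: hnL; lia.
rewrite child_US //.
rewrite (_ : (n - p).-1 = n - p.+1)%N; last by lia.
rewrite IH; last by lia.
by rewrite (blk_split hp) -catA.
Qed.


Lemma perm_flatten_rev (T0 : eqType) (ss : seq (seq T0)) : perm_eq (flatten (rev ss)) (flatten ss).
Proof.
elim: ss => [|x ss IH] //=.
rewrite rev_cons flatten_rcons perm_catC.
by rewrite perm_cat2l.
Qed.

Lemma coef_nz (p : rpoly S C) m e : coef p m e <> 0%R -> exists t, [/\ t \in p, t.2.1 = m & t.1 != 0%R].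
Proof.
move=> H; case: (boolP (has (fun t : term S C => (t.2.1 == m) && (t.1 != 0%R)) p)).
  by move/hasP => [t ht /andP [/eqP h1 h2]]; exists t.
move/hasPn => hp; case: H; rewrite /coef big1_seq // => t /andP [/andP [h1 _] ht].
by move: (hp t ht); rewrite h1 /= negbK => /eqP.
Qed.

Lemma reach_start l r : appears (iter l (lie N) (var C (Sb n))) (mk r V) ->
  [/\ (k <= r)%N, (k + 1 + r <= l)%N & (4*k+4 <= 2 * l + 2)%N].
Proof.
move=> [e /coef_nz [t [ht h1 h2]]].
have [_ hre] := @nz_reach S C N l (1%R, (cplx1 (Sb n), [::])) t ht h2; rewrite h1 /= cplx1_mk in hre.
have := final_bounds (main_reach Inv_start hre); rewrite add0n addn0; by [].
Qed.

Lemma main_sec :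
  let mon := fun r : nat =>
    [ffun x => (nat_of_bool (x == Y) * r + nat_of_bool (x == V))%N] in
  let s := var C (sub N c1 n) in
  let target : seq (label C) :=
    (c2, (L - (n - k) + 1)%N, 1%N) ::
      flatten [seq [:: (c1, (n - j)%N, 0%N); (c1, (n - j)%N, 2%N)]
              | j <- iota 0 k] in
  [/\ (forall l r, (0 < l < 2 * k + 1)%N -> ~ appears (iter l (lie N) s) (mon r)),
      (forall r, appears (iter (2 * k + 1) (lie N) s) (mon r) <-> r = k) &
      (forall e, coef (iter (2 * k + 1) (lie N) s) (mon k) e =
                 (if perm_eq e target then 1%R else 0%R))].
Proof.
move=> mon s target.
have p3 : forall e, coef (iter (2 * k + 1) (lie N) s) (mon k) e =
                 (if perm_eq e target then 1%R else 0%R).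
  move=> e; rewrite /s /var cplx1_mk addn1.
  have := @can_A k 0 1%R [::] e (add0n k); rewrite subn0 cats0 => ->.
  have hp : perm_eq (Lp 0) target.
    by rewrite /Lp /target perm_cons subn0 map_rev perm_flatten_rev.
  by rewrite (permPr hp).
split=> //.
- move=> l r hl hap; have [h1 h2 _] := reach_start hap; lia.
- move=> r; split.
    move=> hap; have [h1 h2 _] := reach_start hap; lia.
  move=> ->; exists target; rewrite p3 perm_refl; by [].
Qed.

End Main.

Local Open Scope ring_scope.
(* c1 : Y + S_0 <-> U_1 -> ... <-> U_L -> Y + S_L  (U_j = intm c1 j)
   c2 : Y~ + S_L <-> V_L -> Y~ + S_{L-1} <-> ... <-> V_1 -> Y~ + S_0
        (sub c2 j = S_{L-j}, V_i = intm c2 (L - i + 1));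
   rates: a_j = (c1,j,0), c_j = (c1,j,2), b~_i = (c2, L-i+1, 1). *)
Theorem mainTheorem14 (S C : finType) (N : network S C)
  (hH1 : H1 N) (hH2 : H2 N) (c1 c2 : C) (hc : c1 <> c2) (L : nat)
  (hL : (1 <= L)%N) (hlen1 : len N c1 = L) (hlen2 : len N c2 = L)
  (hsub : forall j, (j <= L)%N -> sub N c2 j = sub N c1 (L - j))
  (n k : nat) (hn : (1 <= n <= L)%N) (hk : (k < n)%N) :
  let Y := enz N c1 in
  let V := intm N c2 (L - (n - k) + 1)%N in
  let mon := fun r : nat =>
    [ffun x => (nat_of_bool (x == Y) * r + nat_of_bool (x == V))%N] in
  let s := var C (sub N c1 n) in
  let target : seq (label C) :=
    (c2, (L - (n - k) + 1)%N, 1%N) ::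
      flatten [seq [:: (c1, (n - j)%N, 0%N); (c1, (n - j)%N, 2%N)]
              | j <- iota 0 k] in
  [/\ (forall l r, (0 < l < 2 * k + 1)%N -> ~ appears (iter l (lie N) s) (mon r)),
      (forall r, appears (iter (2 * k + 1) (lie N) s) (mon r) <-> r = k) &
      (forall e, coef (iter (2 * k + 1) (lie N) s) (mon k) e =
                 (if perm_eq e target then 1 else 0))].
Proof.
exact: (main_sec hH1 hH2 hc hL hlen1 hlen2 hsub hn hk).
Qed.
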